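(* Let $X$ be a metric space with bounded geometry. Then the normalisers of $\ell^\infty(X)$ in $C^*_u(X)$ and in $C^*_{uq}(X)$ coincide. More precisely, for $T\in\mathfrak B(\ell^2(X))$ the following are equivalent: (1) $T$ belongs to the normaliser of $\ell^\infty(X)$ in $C^*_u(X)$; (2) $T$ belongs to the normaliser of $\ell^\infty(X)$ in $C^*_{uq}(X)$; (3) $T=fV^\theta$ for some $f\in\ell^\infty(X)$ and some bijection $\theta:D\to R$ between subsets $D,R\subseteq X$ such that for every $\varepsilon>0$ there exists $K>0$ with $|f(x)|<\varepsilon$ for all $x\in D$ with $d(x,\theta(x))>K$.
   Context: Bounded geometry: $\sup_x|B(x,r)|<\infty$ for all $r>0$. $C^*_u(X)$ is the norm closure of finite propagation operators on $\ell^2(X)$; $C^*_{uq}(X)$ is the $C^*$-algebra of quasi-local operators ($T$ such that for each $\varepsilon>0$ there is $r>0$ with $\|\chi_AT\chi_B\|\leq\varepsilon$ whenever $d(A,B)\geq r$). $\ell^\infty(X)$ acts by multiplication. For a bijection $\theta:D\to R$, $V^\theta$ is the operator with matrix entries $V^\theta_{x,y}=1$ if $x\in D$ and $y=\theta(x)$, and $0$ otherwise. The normaliser of $\mathcal B$ in $\mathcal A$ is $\{a\in\mathcal A: a\mathcal Ba^*\cup a^*\mathcal Ba\subseteq\mathcal B\}$. *)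

(* Defs.v *)
From HB Require Import structures.
From mathcomp Require Import all_boot all_order all_algebra.
From mathcomp Require Import boolp classical_sets reals.
From mathcomp Require Import complex.
Set Implicit Arguments. Unset Strict Implicit. Unset Printing Implicit Defensive.
Import Order.TTheory GRing.Theory Num.Theory.
Local Open Scope ring_scope.

Section Defs.
Variables (R : realType) (X : eqType).
Local Notation C := (complex R).

Definition cabs (z : C) : R := let: Complex a b := z in Num.sqrt (a ^+ 2 + b ^+ 2).
Definition cconj (z : C) : C := let: Complex a b := z in Complex a (- b).

Definition is_metric (d : X -> X -> R) : Prop :=
  [/\ forall x y, 0 <= d x y,
      forall x y, d x y = 0 <-> x = y,
      forall x y, d x y = d y x &
      forall x y z, d x z <= d x y + d y z].

Definition bounded_geometry (d : X -> X -> R) : Prop :=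
  forall r : R, 0 < r -> exists N : nat, forall (x : X) (s : seq X),
    uniq s -> (forall y, y \in s -> d x y <= r) -> (size s <= N)%N.

(** Vectors in C^X; finite sets of points are represented by uniq sequences. *)
Definition vec := X -> C.

(** ||v||_2 <= c  (c >= 0), i.e. every finite partial sum of |v x|^2 is <= c^2 *)
Definition vnorm_le (v : vec) (c : R) : Prop :=
  0 <= c /\ forall s : seq X, uniq s -> \sum_(x <- s) cabs (v x) ^+ 2 <= c ^+ 2.

Definition l2 (v : vec) : Prop := exists c, vnorm_le v c.

(** unconditional (net) summation over X: sum_x a x = c *)
Definition has_sum (a : X -> C) (c : C) : Prop :=
  forall e : R, 0 < e -> exists s0 : seq X, uniq s0 /\
    forall s : seq X, uniq s -> {subset s0 <= s} ->
      cabs (\sum_(x <- s) a x - c) < e.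

Definition inner (v w : vec) (c : C) : Prop :=
  has_sum (fun x => v x * cconj (w x)) c.

(** Operators; only their action on l^2(X) matters. *)
Definition op := vec -> vec.

Definition op_eq (T S : op) : Prop := forall v, l2 v -> forall x, T v x = S v x.

Definition op_comp (T S : op) : op := fun v => T (S v).

Definition bounded_op (T : op) : Prop :=
  [/\ forall v, l2 v -> l2 (T v),
      forall (a : C) v w, l2 v -> l2 w ->
        forall x, T (fun y => a * v y + w y) x = a * T v x + T w x &
      exists c : R, 0 <= c /\ forall v b, l2 v -> vnorm_le v b -> vnorm_le (T v) (c * b)].

Definition opdist_le (T S : op) (e : R) : Prop :=
  0 <= e /\ forall v b, l2 v -> vnorm_le v b ->
    vnorm_le (fun x => T v x - S v x) (e * b).

Definition is_adjoint (T S : op) : Prop :=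
  forall v w, l2 v -> l2 w -> forall c, inner (T v) w c <-> inner v (S w) c.

Definition linf (f : X -> C) : Prop := exists c : R, forall x, cabs (f x) <= c.
Definition mult (f : X -> C) : op := fun v x => f x * v x.

Definition chi (A : set X) : op := fun v x => if `[< A x >] then v x else 0.

Definition delta (y : X) : vec := fun x => if x == y then 1 else 0.

(** finite propagation: matrix entries T_{x,y} = (T delta_y)(x) vanish for d(x,y) > r *)
Definition finite_propagation (d : X -> X -> R) (T : op) : Prop :=
  exists r : R, forall x y, r < d x y -> T (delta y) x = 0.

(** C*_u(X): norm closure of the bounded finite propagation operators *)
Definition in_Cu (d : X -> X -> R) (T : op) : Prop :=
  bounded_op T /\ forall e : R, 0 < e -> exists S, [/\ bounded_op S,
    finite_propagation d S & opdist_le T S e].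

Definition in_Cuq (d : X -> X -> R) (T : op) : Prop :=
  bounded_op T /\ forall e : R, 0 < e -> exists r : R, 0 < r /\
    forall A B : set X, (forall a b, A a -> B b -> r <= d a b) ->
      opdist_le (op_comp (chi A) (op_comp T (chi B))) (fun v _ => 0) e.

Definition in_linf_op (T : op) : Prop := exists h, linf h /\ op_eq T (mult h).

Definition in_normaliser (inA : op -> Prop) (T : op) : Prop :=
  inA T /\ exists Ts : op, [/\ bounded_op Ts, is_adjoint T Ts &
    forall g, linf g ->
      in_linf_op (op_comp T (op_comp (mult g) Ts)) /\
      in_linf_op (op_comp Ts (op_comp (mult g) T))].

Definition bij_on (D Rg : set X) (theta : X -> X) : Prop :=
  [/\ forall x, D x -> Rg (theta x),
      forall x y, D x -> D y -> theta x = theta y -> x = y &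
      forall y, Rg y -> exists2 x, D x & theta x = y].

(** V^theta, with (V^theta)_{x,y} = 1 iff x in D and y = theta x *)
Definition Vtheta (D : set X) (theta : X -> X) : op :=
  fun v x => if `[< D x >] then v (theta x) else 0.

End Defs.

(* Main.v *)
Require Import Defs.
From HB Require Import structures.
From mathcomp Require Import all_boot all_order all_algebra.
From mathcomp Require Import boolp classical_sets reals.
From mathcomp Require Import complex.
Import Order.TTheory GRing.Theory Num.Theory.
Local Open Scope ring_scope.
From mathcomp Require Import ring lra.
Set Implicit Arguments. Unset Strict Implicit.


Section Cplx.
Variable R : realType.
Local Notation C := (complex R).

Lemma cabsE (z : C) : cabs z = Normc.normc z.
Proof. by case: z. Qed.
Lemma cabs_ge0 (z : C) : 0 <= cabs z.
Proof. by case: z => a b /=; exact: sqrtr_ge0. Qed.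
Lemma cabs0 : cabs (0 : C) = 0.
Proof. by rewrite cabsE Normc.normc0. Qed.
Lemma cabs_eq0 (z : C) : cabs z = 0 -> z = 0.
Proof. by rewrite cabsE => /Normc.eq0_normc. Qed.
Lemma cabsM (a b : C) : cabs (a * b) = cabs a * cabs b.
Proof. by rewrite !cabsE Normc.normcM. Qed.
Lemma cabsD (a b : C) : cabs (a + b) <= cabs a + cabs b.
Proof. by rewrite !cabsE; exact: (le_normcD (a : Rcomplex R) b). Qed.
Lemma cabsN (a : C) : cabs (- a) = cabs a.
Proof. by rewrite !cabsE; exact: (normcN (a : Rcomplex R)). Qed.
Lemma cabs1 : cabs (1 : C) = 1.
Proof. by rewrite cabsE Normc.normc1. Qed.
Lemma cconjE (z : C) : cconj z = conjc z.
Proof. by case: z. Qed.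
Lemma cconjM (a b : C) : cconj (a * b) = cconj a * cconj b.
Proof. by rewrite !cconjE rmorphM. Qed.
Lemma cconjK (a : C) : cconj (cconj a) = a.
Proof. by rewrite !cconjE conjcK. Qed.
Lemma cconj0 : cconj (0 : C) = 0.
Proof. by rewrite cconjE rmorph0. Qed.
Lemma cabs_conj (a : C) : cabs (cconj a) = cabs a.
Proof. by case: a => a b /=; rewrite sqrrN. Qed.
Lemma cconj_eq0 (a : C) : cconj a = 0 -> a = 0.
Proof. by move=> h; rewrite -(cconjK a) h cconj0. Qed.
End Cplx.

Section Sums.
Variable R : realType.
Variable X : eqType.
Local Notation C := (complex R).

Lemma sum_supp (V : nmodType) (a : X -> V) (s s' : seq X) :
  uniq s -> uniq s' -> (forall x, a x != 0 -> (x \in s) = (x \in s')) ->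
  \sum_(x <- s) a x = \sum_(x <- s') a x.
Proof.
move=> us us' h.
have E t : \sum_(x <- t) a x = \sum_(x <- [seq x <- t | a x != 0]) a x.
  rewrite big_filter (bigID (fun x => a x != 0)) /= [X in _ + X]big1 ?addr0 //.
  by move=> x /negPn /eqP.
rewrite E [RHS]E; apply: perm_big; apply: uniq_perm; rewrite ?filter_uniq //.
by move=> x; rewrite !mem_filter; case: (boolP (a x != 0)) => //= /h.
Qed.

Lemma has_sum_unique (a : X -> C) c1 c2 :
  has_sum a c1 -> has_sum a c2 -> c1 = c2.
Proof.
move=> h1 h2; apply/eqP/negPn/negP => ne.
have ne' : c1 - c2 != 0 by rewrite subr_eq0.
have pos : 0 < cabs (c1 - c2).
  rewrite lt_neqAle cabs_ge0 andbT eq_sym; apply/eqP => /cabs_eq0 /eqP.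
  by rewrite (negbTE ne').
have e0 : 0 < cabs (c1 - c2) / 2 by rewrite divr_gt0.
have [s1 [u1 H1]] := h1 _ e0; have [s2 [u2 H2]] := h2 _ e0.
set s := undup (s1 ++ s2).
have us : uniq s by apply: undup_uniq.
have A : cabs (\sum_(x <- s) a x - c1) < cabs (c1 - c2) / 2.
  by apply: H1 => // x hx; rewrite mem_undup mem_cat hx.
have B : cabs (\sum_(x <- s) a x - c2) < cabs (c1 - c2) / 2.
  by apply: H2 => // x hx; rewrite mem_undup mem_cat hx orbT.
have : cabs (c1 - c2) <= cabs (\sum_(x <- s) a x - c2) + cabs (\sum_(x <- s) a x - c1).
  have -> : c1 - c2 = (\sum_(x <- s) a x - c2) - (\sum_(x <- s) a x - c1).
    by ring.
  have := cabsD (\sum_(x <- s) a x - c2) (- (\sum_(x <- s) a x - c1)).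
  by rewrite cabsN.
move=> le; have := lt_le_trans (ltrD B A) (le_refl _).
rewrite -splitr => lt; have := le_lt_trans le lt; by rewrite ltxx.
Qed.

Lemma has_sum_single (a : X -> C) x :
  (forall z, z != x -> a z = 0) -> has_sum a (a x).
Proof.
move=> h e e0; exists [:: x]; split => // s us sub.
have -> : \sum_(z <- s) a z = a x.
  rewrite (sum_supp (s' := [:: x])) ?big_seq1 //.
  move=> z nz; have : z == x by apply/negPn/negP => /h hz; rewrite hz eqxx in nz.
  by move/eqP ->; rewrite mem_seq1 eqxx sub // mem_seq1.
by rewrite subrr cabs0.
Qed.

Lemma has_sum0 : has_sum (fun _ : X => (0 : C)) 0.
Proof.
move=> e e0; exists [::]; split => // s _ _.
by rewrite big1 // subrr cabs0.
Qed.

End Sums.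

Section Norms.
Variable R : realType.
Variable X : eqType.
Local Notation C := (complex R).

Lemma sq_le (a b : R) : 0 <= a -> 0 <= b -> a ^+ 2 <= b ^+ 2 -> a <= b.
Proof. by move=> a0 b0; rewrite ler_sqr // nnegrE. Qed.

Lemma sq_le' (a b : R) : 0 <= a -> a <= b -> a ^+ 2 <= b ^+ 2.
Proof. by move=> a0 ab; rewrite ler_sqr // nnegrE //; apply: le_trans ab. Qed.

Lemma vnorm_pt (v : vec R X) b x : vnorm_le v b -> cabs (v x) <= b.
Proof.
move=> [b0 h]; apply: sq_le => //; first exact: cabs_ge0.
by have := h [:: x] erefl; rewrite big_seq1.
Qed.

Lemma vnorm_pull (theta : X -> X) (D : set X) (v u : vec R X) (M b : R) :
  (forall x y, D x -> D y -> theta x = theta y -> x = y) -> 0 <= M ->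
  vnorm_le v b ->
  (forall x, cabs (u x) <= M * (if `[< D x >] then cabs (v (theta x)) else 0)) ->
  vnorm_le u (M * b).
Proof.
move=> inj M0 [b0 hv] hu; split; first exact: mulr_ge0.
move=> s us.
apply: (@le_trans _ _ (\sum_(x <- s) (M * (if `[< D x >] then cabs (v (theta x)) else 0)) ^+ 2)).
  apply: ler_sum => x _; apply: sq_le' => //; exact: cabs_ge0.
have -> : \sum_(x <- s) (M * (if `[< D x >] then cabs (v (theta x)) else 0)) ^+ 2
   = M ^+ 2 * \sum_(y <- [seq theta x | x <- [seq x <- s | `[< D x >]]]) cabs (v y) ^+ 2.
  rewrite big_map big_filter mulr_sumr [RHS]big_mkcond /=; apply: eq_bigr => x _.
  by case: ifP => _; rewrite ?exprMn // ?mulr0 expr0n /= ?mulr0.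
rewrite exprMn; apply: ler_wpM2l; first exact: sqr_ge0.
apply: hv; rewrite map_inj_in_uniq ?filter_uniq //.
move=> x y; rewrite !mem_filter => /andP[/asboolP hx _] /andP[/asboolP hy _].
exact: inj.
Qed.

Lemma vnorm_delta (y : X) : vnorm_le (delta R y) 1.
Proof.
split => // s us.
rewrite (sum_supp (s' := if y \in s then [:: y] else [::])) //.
- by case: ifP => _; rewrite ?big_seq1 ?big_nil /delta ?eqxx ?cabs1 ?expr1n.
- by case: ifP.
- move=> x; rewrite /delta; case: (eqVneq x y) => [->|_]; last by rewrite cabs0 expr0n eqxx.
  by case: ifP => h _ /=; rewrite ?mem_seq1 ?eqxx.
Qed.

Lemma l2_delta (y : X) : l2 (delta R y).
Proof. by exists 1; apply: vnorm_delta. Qed.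

End Norms.

Section Reindex.
Variable R : realType.
Variable X : eqType.
Local Notation C := (complex R).

Lemma has_sum_reindex (D Rg : set X) (th ps : X -> X) (a b : X -> C) c :
  (forall x, D x -> Rg (th x) /\ ps (th x) = x) ->
  (forall y, Rg y -> D (ps y) /\ th (ps y) = y) ->
  (forall x, ~ D x -> a x = 0) -> (forall y, ~ Rg y -> b y = 0) ->
  (forall x, D x -> b (th x) = a x) ->
  has_sum a c -> has_sum b c.
Proof.
move=> hD hR a0 b0 hab ha e e0.
have [s0 [u0 H0]] := ha e e0.
exists (undup [seq th x | x <- [seq x <- s0 | `[< D x >]]]); split; first exact: undup_uniq.
move=> s us sub.
set L := [seq ps y | y <- [seq y <- s | `[< Rg y >]]].
have uL : uniq L.
  rewrite map_inj_in_uniq ?filter_uniq // => y y'.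
  rewrite !mem_filter => /andP[/asboolP hy _] /andP[/asboolP hy' _] E.
  by rewrite -(hR _ hy).2 -(hR _ hy').2 E.
set t := undup (L ++ s0).
have ut : uniq t by apply: undup_uniq.
have sub0 : {subset s0 <= t} by move=> x hx; rewrite mem_undup mem_cat hx orbT.
suff -> : \sum_(x <- s) b x = \sum_(x <- t) a x by apply: H0.
rewrite (sum_supp (s' := [seq y <- s | `[< Rg y >]])) ?filter_uniq //; last first.
  move=> y; rewrite mem_filter => nz.
  have /asboolP -> // : Rg y.
  by apply: contrapT => /b0 hb; rewrite hb eqxx in nz.
rewrite (@eq_big_seq _ _ _ _ _ _ (fun y => a (ps y))); last first.
  by move=> y; rewrite mem_filter => /andP[/asboolP hy _]; rewrite -{1}(hR _ hy).2 hab //; exact: (hR _ hy).1.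
have -> : \sum_(y <- [seq y <- s | `[< Rg y >]]) a (ps y) = \sum_(x <- L) a x by rewrite big_map.
apply: sum_supp => // x nz.
have Dx : D x by apply: contrapT => /a0 hx; rewrite hx eqxx in nz.
rewrite mem_undup mem_cat; case: (boolP (x \in L)) => //= nL.
case: (boolP (x \in s0)) => // xs0; exfalso; apply: (negP nL); apply/mapP; exists (th x); last by rewrite (hD _ Dx).2.
rewrite mem_filter; apply/andP; split; first by apply/asboolP; exact: (hD _ Dx).1.
by apply: sub; rewrite mem_undup; apply: map_f; rewrite mem_filter xs0 andbT; apply/asboolP.
Qed.

End Reindex.

Section Ops.
Variable R : realType.
Variable X : eqType.
Local Notation C := (complex R).
Implicit Types (T S : op R X).

Lemma vnorm0 : vnorm_le (fun _ : X => (0 : C)) 0.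
Proof. by split => // s _; rewrite big1 ?expr0n // => x _; rewrite cabs0 expr0n. Qed.

Lemma l2_0 : l2 (fun _ : X => (0 : C)).
Proof. by exists 0; apply: vnorm0. Qed.

Lemma op_zero T x : bounded_op T -> T (fun _ => 0) x = 0.
Proof.
case=> _ lin _; have := lin 1 _ _ l2_0 l2_0 x.
have -> : (fun y : X => (1 : C) * 0 + 0) = (fun _ => 0).
  by apply: funext => y; rewrite mul1r addr0.
rewrite mul1r => h; have := congr1 (fun z => z - T (fun _ => 0) x) h.
by rewrite addrK subrr.
Qed.

Lemma op_scale T (a : C) v x : bounded_op T -> l2 v ->
  T (fun z => a * v z) x = a * T v x.
Proof.
move=> bT lv; have [_ lin _] := bT; have := lin a _ _ lv l2_0 x.
have -> : (fun y : X => a * v y + 0) = (fun z => a * v z).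
  by apply: funext => y; rewrite addr0.
by rewrite op_zero // addr0.
Qed.

Lemma has_sum_single' (a : X -> C) x c :
  (forall z, z != x -> a z = 0) -> a x = c -> has_sum a c.
Proof. by move=> h <-; apply: has_sum_single. Qed.

Lemma cconj1 : cconj (1 : C) = 1.
Proof. by rewrite cconjE rmorph1. Qed.

Lemma delta_mul (g : vec R X) y :
  (fun z => delta R y z * g z) = (fun z => g y * delta R y z).
Proof.
apply: funext => z; rewrite /delta; case: (eqVneq z y) => [->|_].
  by rewrite mulr1 mul1r.
by rewrite mulr0 mul0r.
Qed.

Lemma linf_delta (y : X) : linf (delta R y).
Proof.
by exists 1 => x; rewrite /delta; case: eqP; rewrite ?cabs1 ?cabs0.
Qed.

Section Norm.
Variables (T Ts : op R X).
Hypotheses (bT : bounded_op T) (bTs : bounded_op Ts) (adj : is_adjoint T Ts)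
  (nor : forall g, linf g ->
      in_linf_op (op_comp T (op_comp (mult g) Ts)) /\
      in_linf_op (op_comp Ts (op_comp (mult g) T))).

Local Notation M x y := (T (delta R y) x).

Lemma adj_entry x y : Ts (delta R x) y = cconj (M x y).
Proof.
have h1 : inner (T (delta R y)) (delta R x) (M x y).
  apply: (has_sum_single' (x := x)) => [z zx|]; rewrite /delta /=.
    by rewrite (negbTE zx) cconj0 mulr0.
  by rewrite eqxx cconj1 mulr1.
have /(adj (l2_delta _ _) (l2_delta _ _)) h2 := h1.
have h3 : has_sum (fun z => delta R y z * cconj (Ts (delta R x) z)) (cconj (Ts (delta R x) y)).
  apply: (has_sum_single' (x := y)) => [z zy|]; rewrite /delta /=.
    by rewrite (negbTE zy) mul0r.
  by rewrite eqxx mul1r.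
by rewrite (has_sum_unique h2 h3) cconjK.
Qed.

Lemma col_single y x x' : x != x' -> M x y = 0 \/ M x' y = 0.
Proof.
move=> nx; have [[h [_ hh]] _] := nor (linf_delta y).
have := hh _ (l2_delta _ x) x'.
rewrite /op_comp /mult delta_mul adj_entry (op_scale _ _ bT (l2_delta _ _)).
rewrite /delta eq_sym (negbTE nx) mulr0 => /eqP; rewrite mulf_eq0 => /orP[/eqP/cconj_eq0|/eqP]; tauto.
Qed.

Lemma row_single x y y' : y != y' -> M x y = 0 \/ M x y' = 0.
Proof.
move=> ny; have [_ [h [_ hh]]] := nor (linf_delta x).
have := hh _ (l2_delta _ y) y'.
rewrite /op_comp /mult delta_mul (op_scale _ _ bTs (l2_delta _ _)) adj_entry.
rewrite /delta eq_sym (negbTE ny) mulr0 => /eqP; rewrite mulf_eq0 => /orP[/eqP|/eqP/cconj_eq0]; tauto.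
Qed.

Lemma expand v x : l2 v -> has_sum (fun z => v z * M x z) (T v x).
Proof.
move=> lv.
have h1 : inner (T v) (delta R x) (T v x).
  apply: (has_sum_single' (x := x)) => [z zx|]; rewrite /delta /=.
    by rewrite (negbTE zx) cconj0 mulr0.
  by rewrite eqxx cconj1 mulr1.
have /(adj lv (l2_delta _ _)) h2 := h1.
move: h2; rewrite /inner.
have -> // : (fun z => v z * cconj (Ts (delta R x) z)) = (fun z => v z * M x z).
by apply: funext => z; rewrite adj_entry cconjK.
Qed.


Lemma form_of (d : X -> X -> R) :
  (forall e : R, 0 < e -> exists K : R, 0 < K /\
     forall x y, K < d x y -> cabs (M x y) <= e) ->
  exists (f : X -> C) (D Rg : set X) (theta : X -> X),
      [/\ linf f, bij_on D Rg theta,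
          op_eq T (op_comp (mult f) (Vtheta D theta)) &
          forall e : R, 0 < e -> exists K : R, 0 < K /\
            forall x, D x -> K < d x (theta x) -> cabs (f x) < e].
Proof.
move=> dec.
pose D : set X := fun x => exists y, M x y != 0.
pose th : X -> X := fun x => match pselect (D x) with
   | left H => projT1 (cid H) | right _ => x end.
have thD x : D x -> M x (th x) != 0.
  rewrite /th; case: pselect => // H _; exact: (projT2 (cid H)).
have nD x : ~ D x -> forall y, M x y = 0.
  by move=> nd y; apply/eqP/negP => /negP h; apply: nd; exists y.
have uniqx x y : D x -> M x y != 0 -> y = th x.
  move=> Dx nz; apply/eqP/negP => /negP ne.
  by case: (row_single x ne) => h; [move: nz|move: (thD _ Dx)]; rewrite h eqxx.
pose f x := M x (th x).
pose Rg : set X := fun y => exists2 x, D x & th x = y.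
exists f, D, Rg, th; split.
- case: bT => _ _ [c [c0 hc]]; exists c => x.
  have := @vnorm_pt R X _ _ x (hc _ _ (l2_delta R (th x)) (vnorm_delta R (th x))).
  by rewrite mulr1.
- split.
  + by move=> x Dx; exists x.
  + move=> x x' Dx Dx' E; apply/eqP/negP => /negP ne.
    by case: (col_single (th x) ne) => h; [move: (thD _ Dx)|move: (thD _ Dx'); rewrite -E]; rewrite h eqxx.
  + by move=> y [x Dx <-]; exists x.
- move=> v lv x; have hs := expand x lv.
  rewrite /op_comp /mult /Vtheta /f.
  case: (pselect (D x)) => Dx.
    rewrite asboolT //.
    have hs2 : has_sum (fun z => v z * M x z) (v (th x) * M x (th x)).
      apply: (has_sum_single' (x := th x)) => // z zn.
      have : M x z = 0.
        apply/eqP/negP => /negP nz; move: zn; by rewrite (uniqx _ _ Dx nz) eqxx.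
      by move=> ->; rewrite mulr0.
    by rewrite (has_sum_unique hs hs2) mulrC.
  rewrite asboolF // mulr0.
  have hs2 : has_sum (fun z => v z * M x z) 0.
    have -> : (fun z => v z * M x z) = (fun _ => 0).
      by apply: funext => z; rewrite nD // mulr0.
    exact: has_sum0.
  exact: (has_sum_unique hs hs2).
- move=> e e0; have [K [K0 hK]] := dec (e / 2) (divr_gt0 e0 (ltr0Sn _ 1)).
  exists K; split => // x Dx lt; apply: (le_lt_trans (hK _ _ lt)).
  by rewrite ltr_pdivrMr // ltr_pMr // ltr1n.
Qed.

End Norm.
End Ops.

Local Open Scope classical_set_scope.
Local Open Scope ring_scope.

Section Decay.
Variable R : realType.
Variable X : eqType.
Variable d : X -> X -> R.
Local Notation C := (complex R).

Definition decay (T : op R X) := forall e : R, 0 < e -> exists K : R, 0 < K /\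
     forall x y, K < d x y -> cabs (T (delta R y) x) <= e.

Lemma decay_Cuq T : in_Cuq d T -> decay T.
Proof.
case=> _ h e e0; have [r [r0 hr]] := h e e0; exists r; split => // x y lt.
have sep : forall a b, [set x] a -> [set y] b -> r <= d a b.
  by move=> a b -> ->; apply: ltW.
have [_ hv] := hr _ _ sep.
have := @vnorm_pt R X _ _ x (hv _ _ (l2_delta R y) (vnorm_delta R y)).
rewrite /op_comp.
have -> : (chi [set y] (delta R y) : X -> C) = delta R y.
  apply: funext => z; rewrite /chi /delta; case: (eqVneq z y) => [->|ne].
    by rewrite asboolT.
  by case: ifP.
by rewrite /chi asboolT // subr0 mulr1.
Qed.

Lemma decay_Cu T : in_Cu d T -> decay T.
Proof.
case=> _ h e e0; have [S [_ [r hr] [_ hd]]] := h e e0.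
exists (Num.max r 1); split; first by rewrite lt_max ltr01 orbT.
move=> x y lt.
have := @vnorm_pt R X _ _ x (hd _ _ (l2_delta R y) (vnorm_delta R y)).
rewrite hr ?subr0 ?mulr1 //.
by apply: le_lt_trans lt; rewrite le_max lexx.
Qed.

End Decay.

Section Conv.
Variable R : realType.
Variable X : eqType.
Local Notation C := (complex R).

Definition Op (g : X -> C) (E : set X) (ph : X -> X) : op R X :=
  fun w y => g y * (if `[< E y >] then w (ph y) else 0).

Lemma linf_nn (g : X -> C) : linf g -> exists c, 0 <= c /\ forall x, cabs (g x) <= c.
Proof.
case=> c hc; exists (Num.max c 0); split; first by rewrite le_max lexx orbT.
by move=> x; apply: le_trans (hc x) _; rewrite le_max lexx.
Qed.

Lemma cabs_mul_le (a b : C) c : cabs a <= c -> cabs (a * b) <= c * cabs b.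
Proof. by move=> h; rewrite cabsM ler_wpM2r // cabs_ge0. Qed.

Lemma Op_pt (g : X -> C) E ph c v x : (forall x, cabs (g x) <= c) -> 0 <= c ->
  cabs (Op g E ph v x) <= c * (if `[< E x >] then cabs (v (ph x)) else 0).
Proof.
move=> hc c0; rewrite /Op; case: ifP => _; first exact: cabs_mul_le.
by rewrite mulr0 cabs0 mulr0.
Qed.

Lemma Op_bounded (g : X -> C) (E : set X) ph :
  (forall x y, E x -> E y -> ph x = ph y -> x = y) -> linf g ->
  bounded_op (Op g E ph).
Proof.
move=> inj /linf_nn [c [c0 hc]]; split.
- move=> v0 lv; case: lv => b hb; exists (c * b).
  by apply: (vnorm_pull inj c0 hb) => x; apply: Op_pt.
- by move=> a v0 w _ _ x; rewrite /Op; case: ifP => _; ring.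
- exists c; split => // v0 b _ hb.
  by apply: (vnorm_pull inj c0 hb) => x; apply: Op_pt.
Qed.

End Conv.

Section Main.
Variable R : realType.
Variable X : eqType.
Local Notation C := (complex R).
Variables (f : X -> C) (D Rg : set X) (th : X -> X) (T : op R X).
Hypotheses (lf : linf f) (bij : bij_on D Rg th)
  (hT : op_eq T (op_comp (mult f) (Vtheta D th))).

Definition ps (y : X) : X := match pselect (exists x, D x /\ th x = y) with
  | left H => projT1 (cid H) | right _ => y end.

Lemma hR y : Rg y -> D (ps y) /\ th (ps y) = y.
Proof.
move=> Ry; rewrite /ps; case: pselect => [H|nH]; first exact: (projT2 (cid H)).
by exfalso; apply: nH; case: bij => _ _ /(_ _ Ry) [x Dx E]; exists x.
Qed.

Lemma th_inj x y : D x -> D y -> th x = th y -> x = y.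
Proof. by case: bij => _ inj _; apply: inj. Qed.

Lemma hD x : D x -> Rg (th x) /\ ps (th x) = x.
Proof.
move=> Dx; have Rx : Rg (th x) by case: bij => + _ _; apply.
split => //; have [D' E] := hR Rx; exact: th_inj.
Qed.

Lemma ps_inj x y : Rg x -> Rg y -> ps x = ps y -> x = y.
Proof. by move=> Rx Ry E; rewrite -(hR Rx).2 -(hR Ry).2 E. Qed.

Definition Ts : op R X := Op (fun y => cconj (f (ps y))) Rg ps.

Lemma Tform v : l2 v -> (T v : X -> C) = Op f D th v.
Proof. by move=> lv; apply: funext => x; rewrite hT. Qed.

Lemma linf_conj : linf (fun y => cconj (f (ps y))).
Proof. by case: lf => c hc; exists c => y; rewrite cabs_conj. Qed.

Lemma bTs : bounded_op Ts.
Proof. apply: Op_bounded; [exact: ps_inj | exact: linf_conj]. Qed.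

Lemma bOp : bounded_op (Op f D th).
Proof. apply: Op_bounded; [exact: th_inj | exact: lf]. Qed.

Lemma adjT : is_adjoint T Ts.
Proof.
move=> v w lv lw c; rewrite /inner (Tform lv); split.
- apply: (has_sum_reindex (D := D) (Rg := Rg) (th := th) (ps := ps)).
  + exact: hD.
  + exact: hR.
  + by move=> x nD; rewrite /Op asboolF // !mulr0 mul0r.
  + by move=> y nR; rewrite /Ts /Op asboolF // mulr0 cconj0 mulr0.
  + move=> x Dx; have [Rx E] := hD Dx.
    rewrite /Ts /Op !asboolT // E cconjM cconjK; ring.
- apply: (has_sum_reindex (D := Rg) (Rg := D) (th := ps) (ps := th)).
  + exact: hR.
  + exact: hD.
  + by move=> y nR; rewrite /Ts /Op asboolF // mulr0 cconj0 mulr0.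
  + by move=> x nD; rewrite /Op asboolF // !mulr0 mul0r.
  + move=> y Ry; have [Dy E] := hR Ry.
    rewrite /Ts /Op !asboolT // E cconjM cconjK; ring.
Qed.


Lemma l2_mult (g : X -> C) v : linf g -> l2 v -> l2 (mult g v).
Proof.
move=> /linf_nn [c [c0 hc]] [b hb]; exists (c * b).
apply: (vnorm_pull (theta := id) (D := setT) _ c0 hb) => // x.
by rewrite asboolT //; apply: cabs_mul_le.
Qed.

Lemma vnorm_chi (B : set X) (v : vec R X) b : vnorm_le v b -> vnorm_le (chi B v) b.
Proof.
move=> hb; rewrite -[b]mul1r.
apply: (vnorm_pull (theta := id) (D := setT) _ ler01 hb) => // x.
rewrite asboolT // mul1r /chi; case: ifP => _ //.
by rewrite cabs0 cabs_ge0.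
Qed.

Lemma norT g : linf g ->
  in_linf_op (op_comp T (op_comp (mult g) Ts)) /\
  in_linf_op (op_comp Ts (op_comp (mult g) T)).
Proof.
move=> lg; have [cf [cf0 hf]] := linf_nn lf; have [cg [cg0 hg]] := linf_nn lg.
have b3 (a b e : C) : cabs a <= cf -> cabs b <= cf -> cabs e <= cg ->
    cabs (a * cconj b * e) <= cf * cf * cg.
  move=> ha hb he; rewrite !cabsM cabs_conj.
  apply: ler_pM; rewrite ?mulr_ge0 ?cabs_ge0 //.
  by apply: ler_pM; rewrite ?cabs_ge0.
have nn : 0 <= cf * cf * cg by rewrite !mulr_ge0.
split.
- exists (fun x => if `[< D x >] then f x * cconj (f x) * g (th x) else 0); split.
    exists (cf * cf * cg) => x; case: ifP => _; last by rewrite cabs0.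
    exact: b3.
  move=> w lw x.
  have l1 : l2 (mult g (Ts w)) by apply: l2_mult => //; case: bTs => + _ _; apply.
  rewrite /op_comp (hT l1) /op_comp /mult /Vtheta /Ts /Op.
  case: (pselect (D x)) => Dx; last by rewrite !asboolF // !mulr0 mul0r.
  have [Rx E] := hD Dx; rewrite asboolT // (asboolT Rx) E; ring.
- exists (fun y => if `[< Rg y >] then cconj (f (ps y)) * g (ps y) * f (ps y) else 0); split.
    exists (cf * cf * cg) => x; case: ifP => _; last by rewrite cabs0.
    rewrite !cabsM cabs_conj mulrAC; apply: ler_pM; rewrite ?mulr_ge0 ?cabs_ge0 //.
    by apply: ler_pM; rewrite ?cabs_ge0.
  move=> w lw y.
  rewrite /op_comp /Ts /Op /mult (Tform lw) /Op.
  case: (pselect (Rg y)) => Ry; last by rewrite !asboolF // !mulr0 mul0r.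
  have [Dy E] := hR Ry.
  rewrite !asboolT // E; ring.
Qed.

Lemma CuT (d : X -> X -> R) : bounded_op T ->
  (forall e : R, 0 < e -> exists K : R, 0 < K /\
     forall x, D x -> K < d x (th x) -> cabs (f x) < e) -> in_Cu d T.
Proof.
move=> bT dec; split => // e e0; have [K [K0 hK]] := dec e e0.
have [cf [cf0 hf]] := linf_nn lf.
pose f1 x := if d x (th x) <= K then f x else 0.
exists (Op f1 D th); split.
- apply: Op_bounded; first exact: th_inj.
  exists cf => x; rewrite /f1; case: ifP => _ //; by rewrite cabs0.
- exists K => x y lt; rewrite /Op /delta /f1 /=.
  case: (pselect (D x)) => Dx; last by rewrite asboolF // mulr0.
  rewrite asboolT //; case: (eqVneq (th x) y) => [E|ne].
    by rewrite E leNgt lt /= mul0r.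
  by rewrite mulr0.
- split; first exact: ltW.
  move=> v b lv hb; apply: (vnorm_pull th_inj (ltW e0) hb) => x.
  rewrite hT // /op_comp /mult /Vtheta /Op /f1.
  case: (pselect (D x)) => Dx; last by rewrite !asboolF // !mulr0 subrr cabs0.
  rewrite !asboolT //; case: ifP => h.
    by rewrite subrr cabs0 mulr_ge0 ?cabs_ge0 ?ltW.
  rewrite mul0r subr0; apply: cabs_mul_le; apply: ltW; apply: hK => //.
  by rewrite ltNge h.
Qed.

Lemma CuqT (d : X -> X -> R) : bounded_op T ->
  (forall e : R, 0 < e -> exists K : R, 0 < K /\
     forall x, D x -> K < d x (th x) -> cabs (f x) < e) -> in_Cuq d T.
Proof.
move=> bT dec; split => // e e0; have [K [K0 hK]] := dec e e0.
exists (K + 1); split; first by rewrite addr_gt0.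
move=> A B sep; split; first exact: ltW.
move=> v b lv hb.
have lB : l2 (chi B v) by exists b; apply: vnorm_chi.
apply: (vnorm_pull th_inj (ltW e0) hb) => x.
change (cabs ((if `[< A x >] then T (chi B v) x else 0) - 0) <=
   e * (if `[< D x >] then cabs (v (th x)) else 0)).
rewrite (hT lB) /op_comp /mult /Vtheta /chi subr0.
have nn : 0 <= e * (if `[< D x >] then cabs (v (th x)) else 0).
  apply: mulr_ge0; [exact: ltW | by case: ifP => _; rewrite ?cabs_ge0].
case: (pselect (A x)) => Ax; last by rewrite asboolF // cabs0.
case: (pselect (D x)) => Dx; last by rewrite asboolT // asboolF // !mulr0 cabs0.
case: (pselect (B (th x))) => Bx; last by rewrite (asboolT Ax) (asboolT Dx) asboolF // mulr0 cabs0 mulr_ge0 ?cabs_ge0 ?ltW.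
rewrite !asboolT //; apply: cabs_mul_le; apply: ltW; apply: hK => //.
have := sep _ _ Ax Bx; lra.
Qed.

End Main.

Theorem lemma6p2 (R : realType) (X : eqType) (d : X -> X -> R)
  (hd : is_metric d) (hbg : bounded_geometry d) (T : op R X) :
  bounded_op T ->
  (in_normaliser (in_Cu d) T <-> in_normaliser (in_Cuq d) T) /\
  (in_normaliser (in_Cuq d) T <->
    exists (f : X -> complex R) (D Rg : set X) (theta : X -> X),
      [/\ linf f, bij_on D Rg theta,
          op_eq T (op_comp (mult f) (Vtheta D theta)) &
          forall e : R, 0 < e -> exists K : R, 0 < K /\
            forall x, D x -> K < d x (theta x) -> cabs (f x) < e]).
Proof.
move=> bT.
have P1 : in_normaliser (in_Cu d) T -> exists (f : X -> complex R) (D Rg : set X) (theta : X -> X),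
      [/\ linf f, bij_on D Rg theta,
          op_eq T (op_comp (mult f) (Vtheta D theta)) &
          forall e : R, 0 < e -> exists K : R, 0 < K /\
            forall x, D x -> K < d x (theta x) -> cabs (f x) < e].
  case=> hC [Ts0 [bTs0 adj nor]].
  exact: (form_of bT bTs0 adj nor (decay_Cu hC)).
have P2 : in_normaliser (in_Cuq d) T -> exists (f : X -> complex R) (D Rg : set X) (theta : X -> X),
      [/\ linf f, bij_on D Rg theta,
          op_eq T (op_comp (mult f) (Vtheta D theta)) &
          forall e : R, 0 < e -> exists K : R, 0 < K /\
            forall x, D x -> K < d x (theta x) -> cabs (f x) < e].
  case=> hC [Ts0 [bTs0 adj nor]].
  exact: (form_of bT bTs0 adj nor (decay_Cuq hC)).
have P3 : (exists (f : X -> complex R) (D Rg : set X) (theta : X -> X),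
      [/\ linf f, bij_on D Rg theta,
          op_eq T (op_comp (mult f) (Vtheta D theta)) &
          forall e : R, 0 < e -> exists K : R, 0 < K /\
            forall x, D x -> K < d x (theta x) -> cabs (f x) < e]) ->
   in_normaliser (in_Cu d) T /\ in_normaliser (in_Cuq d) T.
  case=> f [D [Rg [th [lf bij hT dec]]]].
  have N : exists Ts0 : op R X, [/\ bounded_op Ts0, is_adjoint T Ts0 &
    forall g, linf g ->
      in_linf_op (op_comp T (op_comp (mult g) Ts0)) /\
      in_linf_op (op_comp Ts0 (op_comp (mult g) T))].
    exists (Ts f D Rg th); split.
    - exact: bTs.
    - exact: adjT.
    - by move=> g lg; apply: norT.
  split; split => //.
  - exact: (CuT lf bij hT bT dec).
  - exact: (CuqT bij hT bT dec).
split; split.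
- by move/P1/P3 => [].
- by move/P2/P3 => [].
- exact: P2.
- by move/P3 => [].
Qed.
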